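(* Let $\kappa$ be a regular uncountable cardinal and $I$ an ideal on $\kappa$ which is a p-point. Then $I$ is prepleasant if and only if $I$ is pleasant.
   Context: An ideal on $\kappa$ is a family of subsets of $\kappa$ closed under subsets and finite unions, which is $<\kappa$-complete and contains all singletons; $I_\kappa=\{X\subseteq\kappa:|X|<\kappa\}$. $I^*=\{\kappa\setminus X: X\in I\}$. For an ideal $J$, a function $f$ with domain $\subseteq\kappa$ is $J$-small if $f^{-1}(\{\xi\})\in J$ for every $\xi<\kappa$. $I$ is a p-point if for every $I$-small $f:\kappa\to\kappa$ there is $X\in I^*$ with $f\restriction X$ being $I_\kappa$-small. For $A\subseteq\kappa$ and $X_\alpha\subseteq\kappa$, $\bigtriangledown_{\alpha\in A}X_\alpha=\{\xi<\kappa:\exists\alpha<\xi\,(\alpha\in A\wedge \xi\in X_\alpha)\}$. $I$ is pleasant if whenever $A\in I$ and $X_\alpha\in I$ for all $\alpha$, then $\bigtriangledown_{\alpha\in A}X_\alpha\in I$. $I$ is prepleasant if for every $Q\in I$ and every sequence $\langle B_\alpha\rangle_{\alpha<\kappa}$ of bounded subsets of $\kappa$, $\bigtriangledown_{\alpha\in Q}B_\alpha\in I$. *)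

(* Defs.v *)
(* the cardinal kappa is modelled as a type K equipped with a
   strict well-order lt (i.e. the ordinal kappa = {alpha | alpha < kappa});
   subsets of kappa are predicates K -> Prop. *)
From Stdlib Require Import Classical.

Set Implicit Arguments.

Section Kappa.
Variables (K : Type) (lt : K -> K -> Prop).

Definition strict_wellorder : Prop :=
  well_founded lt /\
  (forall x y z, lt x y -> lt y z -> lt x z) /\
  (forall x y, lt x y \/ x = y \/ lt y x).

(* |X| < kappa  (X a subset of kappa): there is no injection of kappa into X *)
Definition small (X : K -> Prop) : Prop :=
  ~ exists f : K -> K, (forall a b, f a = f b -> a = b) /\ (forall a, X (f a)).

Definition bounded (X : K -> Prop) : Prop :=
  exists b, forall x, X x -> lt x b.

(* the order type of (K, lt) is a cardinal: every proper initial segment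
   has cardinality < kappa *)
Definition is_cardinal : Prop :=
  forall a, small (fun x => lt x a).

Definition regular : Prop :=
  forall X, small X -> bounded X.

Definition uncountable : Prop :=
  ~ exists f : K -> nat, forall a b, f a = f b -> a = b.

Definition ideal (I : (K -> Prop) -> Prop) : Prop :=
  (forall X Y, I Y -> (forall x, X x -> Y x) -> I X) /\
  (forall X Y, I X -> I Y -> I (fun x => X x \/ Y x)) /\
  (* <kappa-completeness: unions of fewer than kappa members of I are in I *)
  (forall (A : K -> Prop) (F : K -> K -> Prop),
      small A -> (forall a, A a -> I (F a)) ->
      I (fun x => exists a, A a /\ F a x)) /\
  (forall a, I (fun x => x = a)).

Definition I_kappa (X : K -> Prop) : Prop := small X.

Definition small_fun (J : (K -> Prop) -> Prop) (D : K -> Prop) (f : K -> K)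
  : Prop := forall xi, J (fun x => D x /\ f x = xi).

Definition in_dual (I : (K -> Prop) -> Prop) (X : K -> Prop) : Prop :=
  exists Y, I Y /\ forall x, X x <-> ~ Y x.

Definition p_point (I : (K -> Prop) -> Prop) : Prop :=
  forall f : K -> K, small_fun I (fun _ => True) f ->
    exists X, in_dual I X /\ small_fun I_kappa X f.

Definition diag_union (A : K -> Prop) (X : K -> K -> Prop) : K -> Prop :=
  fun xi => exists alpha, lt alpha xi /\ A alpha /\ X alpha xi.

Definition pleasant (I : (K -> Prop) -> Prop) : Prop :=
  forall (A : K -> Prop) (X : K -> K -> Prop),
    I A -> (forall alpha, I (X alpha)) -> I (diag_union A X).

Definition prepleasant (I : (K -> Prop) -> Prop) : Prop :=
  forall (Q : K -> Prop) (B : K -> K -> Prop),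
    I Q -> (forall alpha, bounded (B alpha)) -> I (diag_union Q B).

End Kappa.

(* Main.v *)
Require Import Defs.
From Stdlib Require Import Classical ClassicalEpsilon.

Lemma bounded_in_I (K : Type) (lt : K -> K -> Prop) (I : (K -> Prop) -> Prop)
  (Hcard : is_cardinal lt) (HI : ideal I) (X : K -> Prop) :
  bounded lt X -> I X.
Proof.
  intros [b Hb]. destruct HI as [Hsub [_ [Hcomp Hsing]]].
  assert (H := Hcomp (fun x => lt x b) (fun a x => x = a) (Hcard b) (fun a _ => Hsing a)).
  apply (Hsub _ _ H). intros x Hx. exists x. split; auto.
Qed.

Theorem theorem3p2 (K : Type) (lt : K -> K -> Prop)
  (Hwo : strict_wellorder lt) (Hcard : is_cardinal lt) (Hreg : regular lt)
  (Hunc : uncountable K) (I : (K -> Prop) -> Prop)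
  (HI : ideal I) (Hp : p_point I) :
  prepleasant lt I <-> pleasant lt I.
Proof.
  split.
  - intros Hpre A X HA HX.
    destruct HI as [Hsub [Hun [Hcomp Hsing]]].
    set (Y := diag_union lt A X).
    set (f := fun xi : K =>
      match excluded_middle_informative (Y xi) with
      | left h => proj1_sig (constructive_indefinite_description _ h)
      | right _ => xi
      end).
    assert (Hf : forall xi, Y xi -> lt (f xi) xi /\ A (f xi) /\ X (f xi) xi).
    { intros xi h. unfold f. destruct (excluded_middle_informative (Y xi)) as [h'|h'].
      - exact (proj2_sig (constructive_indefinite_description _ h')).
      - contradiction. }
    assert (Hf2 : forall xi, ~ Y xi -> f xi = xi).
    { intros xi h. unfold f. destruct (excluded_middle_informative (Y xi)); tauto. }
    assert (Hsf : small_fun I (fun _ => True) f).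
    { intros a. apply (Hsub _ (fun x => X a x \/ x = a)).
      - apply Hun; auto.
      - intros x [_ Hx]. destruct (classic (Y x)) as [Hy|Hy].
        + left. subst a. apply Hf; auto.
        + right. rewrite <- Hx. symmetry. auto. }
    destruct (Hp f Hsf) as [Z [[W [HW HZW]] HZ]].
    assert (HB : I (diag_union lt A (fun a x => Z x /\ f x = a))).
    { apply Hpre; auto. intros a. apply Hreg. apply HZ. }
    apply (Hsub _ _ (Hun _ _ HW HB)).
    intros xi Hy. destruct (classic (W xi)) as [Hw|Hw]; [left; auto|right].
    destruct (Hf xi Hy) as [H1 [H2 H3]].
    exists (f xi). split; auto. split; auto. split; auto. apply HZW; auto.
  - intros Hpl Q B HQ HB. apply Hpl; auto.
    intros a. apply (@bounded_in_I K lt I Hcard HI). apply HB.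
Qed.
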